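(* Assume (A2). Then for every $n\ge0$ and all $(x,t)\in K_{R^*,T^*}$, $\phi_{n+1}(x,t)\ge\phi_n(x,t)\ge0$ and $\psi_{n+1}(x,t)\ge\psi_n(x,t)\ge0$.
   Context: Let $p>1$ and $\mu>0$ with $p<1+2/\mu$, and let $R^*,T^*>0$. Write $B_R=\{x\in\mathbb{R}:|x|<R\}$. Fix constants $\gamma_1,\gamma_2>0$ with $\gamma_1+\gamma_2>\max\big(1,(\mu p 2^p)^{1/(p-1)}\big)$ (standing assumption). Let $f,g$ be real functions on $\mathbb{R}$. Assumption (A2): $f\ge\gamma_1$ and $g\ge\gamma_2$ on $B_{R^*+T^*}$. Let $K_{R^*,T^*}=\{(x,t):t>0,\ |x-x_0|<T^*-t\ \text{for some } x_0\in B_{R^*}\}$. Define iterates $\phi_0\equiv\gamma_1$, $\psi_0\equiv\gamma_2$ and, with $\mathcal{N}_n(x,s)=2^{-p}|\phi_n+\psi_n|^p(x,s)-\frac{\mu}{1+s}\frac{(\phi_n+\psi_n)(x,s)}{2}$, $\phi_{n+1}(x,t)=f(x+t)+\int_0^t\mathcal{N}_n(x+t-s,s)\,ds$, $\psi_{n+1}(x,t)=g(x-t)+\int_0^t\mathcal{N}_n(x-t+s,s)\,ds$. *)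

(* Defs.v *)
From Stdlib Require Import Reals.
From Coquelicot Require Import Coquelicot.
Open Scope R_scope.

(* |a|^q for real exponent q > 0, with the convention 0^q = 0
   (Stdlib's Rpower 0 q = 1, so we guard the zero case). *)
Definition abspow (a q : R) : R :=
  if Req_EM_T a 0 then 0 else Rpower (Rabs a) q.

Definition Nl (p mu : R) (phi psi : R -> R -> R) (x s : R) : R :=
  abspow (phi x s + psi x s) p / Rpower 2 p
  - mu / (1 + s) * ((phi x s + psi x s) / 2).

Fixpoint iterates (p mu g1 g2 : R) (f g : R -> R) (n : nat)
  : (R -> R -> R) * (R -> R -> R) :=
  match n with
  | O => (fun _ _ => g1, fun _ _ => g2)
  | S m =>
      let '(phi, psi) := iterates p mu g1 g2 f g m in
      (fun x t => f (x + t) + RInt (fun s => Nl p mu phi psi (x + t - s) s) 0 t,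
       fun x t => g (x - t) + RInt (fun s => Nl p mu phi psi (x - t + s) s) 0 t)
  end.

Definition phi_n p mu g1 g2 f g n := fst (iterates p mu g1 g2 f g n).
Definition psi_n p mu g1 g2 f g n := snd (iterates p mu g1 g2 f g n).

Definition K_dom (Rs Ts x t : R) : Prop :=
  0 < t /\ exists x0, Rabs x0 < Rs /\ Rabs (x - x0) < Ts - t.

(* Main.v *)
Require Import Defs.
From Stdlib Require Import Reals Lra.
From Coquelicot Require Import Coquelicot.
Open Scope R_scope.

Lemma ballR (x e y : R) : ball x e y <-> Rabs (y - x) < e.
Proof. reflexivity. Qed.

Lemma cont2_to_cont (K : R -> R -> R) a s :
  continuity_2d_pt K a s -> continuous (K a) s.
Proof.
  intros H. apply filterlim_locally. intros eps.
  destruct (H eps) as [d Hd]. exists d. intros y Hy.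
  apply ballR. apply Hd. rewrite Rminus_eq_0, Rabs_R0; apply cond_pos.
  exact Hy.
Qed.

Lemma RInt_abs_bound (f : R -> R) a b M :
  ex_RInt f a b ->
  (forall s, Rmin a b <= s <= Rmax a b -> Rabs (f s) <= M) ->
  Rabs (RInt f a b) <= Rabs (b - a) * M.
Proof.
  intros Hi Hb. destruct (Rle_dec a b) as [h|h].
  - rewrite (Rabs_right (b - a)) by lra. apply abs_RInt_le_const; auto.
    intros t Ht; apply Hb. rewrite Rmin_left, Rmax_right; lra.
  - apply Rnot_le_lt in h. rewrite <- (opp_RInt_swap f b a) by (apply ex_RInt_swap; auto).
    rewrite (Rabs_left (b - a)) by lra. unfold opp; simpl. rewrite Rabs_Ropp.
    replace (- (b - a)) with (a - b) by ring.
    apply abs_RInt_le_const; [lra| apply ex_RInt_swap; auto |].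
    intros t Ht; apply Hb. rewrite Rmin_right, Rmax_left; lra.
Qed.

Lemma param_cont (K : R -> R -> R) (L : R) :
  L < 0 -> (forall a s, L < s -> continuity_2d_pt K a s) ->
  forall a0 t0, L < t0 -> continuity_2d_pt (fun a t => RInt (K a) 0 t) a0 t0.
Proof.
  intros HL HK a0 t0 Ht0 eps.
  set (d := (Rmin 0 t0 - L) / 2).
  assert (Hmin : L < Rmin 0 t0) by (apply Rmin_glb_lt; lra).
  assert (Hd : 0 < d) by (unfold d; lra).
  set (m := Rmin 0 t0 - d). set (M := Rmax 0 t0 + d).
  assert (HLm : L < m) by (unfold m, d; lra).
  assert (H0t0 := Rmin_l 0 t0). assert (H0t0' := Rmin_r 0 t0).
  assert (H1t0 := Rmax_l 0 t0). assert (H1t0' := Rmax_r 0 t0).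
  assert (Hint : forall a u v, m <= u <= M -> m <= v <= M -> ex_RInt (K a) u v).
  { intros a u v Hu Hv. apply (@ex_RInt_continuous R_CompleteNormedModule). intros z Hz.
    apply cont2_to_cont. apply HK.
    assert (Rmin u v >= m) by (apply Rle_ge, Rmin_glb; lra). lra. }
  assert (Hpos1 : 0 < eps / (2 * (Rabs t0 + 1))).
  { apply Rdiv_lt_0_compat. apply cond_pos. pose proof (Rabs_pos t0); lra. }
  destruct (uniform_continuity_2d K (a0 - 1) (a0 + 1) m M) with
    (eps := mkposreal _ Hpos1) as [d1 Hd1].
  { intros; apply HK; lra. }
  destruct (HK a0 t0 Ht0 (mkposreal 1 Rlt_0_1)) as [d2 Hd2].
  set (B := Rabs (K a0 t0) + 1).
  assert (HB : 0 < B) by (unfold B; pose proof (Rabs_pos (K a0 t0)); lra).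
  assert (Hpos2 : 0 < eps / (2 * B)).
  { apply Rdiv_lt_0_compat. apply cond_pos. lra. }
  assert (Hdel : 0 < Rmin (Rmin 1 d1) (Rmin (Rmin d2 d) (eps / (2 * B)))).
  { repeat apply Rmin_pos; try lra; apply cond_pos. }
  exists (mkposreal _ Hdel). simpl. intros a t Ha Ht.
  assert (Hm1 := Rmin_l (Rmin 1 d1) (Rmin (Rmin d2 d) (eps / (2 * B)))).
  assert (Hm2 := Rmin_r (Rmin 1 d1) (Rmin (Rmin d2 d) (eps / (2 * B)))).
  assert (H11 := Rmin_l 1 d1). assert (H12 := Rmin_r 1 d1).
  assert (H21 := Rmin_l (Rmin d2 d) (eps / (2 * B))).
  assert (H22 := Rmin_r (Rmin d2 d) (eps / (2 * B))).
  assert (H31 := Rmin_l d2 d). assert (H32 := Rmin_r d2 d).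
  apply Rabs_def2 in Ha. apply Rabs_def2 in Ht.
  assert (Htm : m <= t <= M) by (unfold m, M; lra).
  assert (Ht0m : m <= t0 <= M) by (unfold m, M; lra).
  assert (H0m : m <= 0 <= M) by (unfold m, M; lra).
  assert (Ech : RInt (K a) 0 t0 + RInt (K a) t0 t = RInt (K a) 0 t).
  { exact (RInt_Chasles (K a) 0 t0 t (Hint _ _ _ H0m Ht0m) (Hint _ _ _ Ht0m Htm)). }
  assert (Emi : RInt (fun s => K a s - K a0 s) 0 t0 = RInt (K a) 0 t0 - RInt (K a0) 0 t0).
  { exact (RInt_minus (K a) (K a0) 0 t0 (Hint _ _ _ H0m Ht0m) (Hint _ _ _ H0m Ht0m)). }
  assert (I1 : Rabs (RInt (fun s => K a s - K a0 s) 0 t0) <= Rabs (t0 - 0) * (eps / (2 * (Rabs t0 + 1)))).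
  { apply RInt_abs_bound.
    - apply (@ex_RInt_minus R_NormedModule (K a) (K a0)); apply Hint; auto.
    - intros s Hs. left.
      assert (Hsm : m <= s <= M) by (unfold m, M; lra).
      apply (Hd1 a0 s a s); try lra.
      apply Rabs_def1; lra. rewrite Rminus_eq_0, Rabs_R0; apply cond_pos. }
  assert (I2 : Rabs (RInt (K a) t0 t) <= Rabs (t - t0) * B).
  { apply RInt_abs_bound. apply Hint; auto.
    intros s Hs.
    assert (Hs' : Rabs (s - t0) < d2).
    { apply Rabs_def1.
      - assert (Rmax t0 t <= Rmax t0 t) by lra.
        destruct (Rle_dec t0 t) as [h|h].
        + rewrite Rmax_right in Hs by lra; lra.
        + rewrite Rmax_left in Hs by lra; lra.
      - destruct (Rle_dec t0 t) as [h|h].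
        + rewrite Rmin_left in Hs by lra; lra.
        + rewrite Rmin_right in Hs by lra; lra. }
    specialize (Hd2 a s ltac:(apply Rabs_def1; lra) Hs'). simpl in Hd2.
    unfold B. 
    replace (K a s) with (K a0 t0 + (K a s - K a0 t0)) by ring.
    eapply Rle_trans. apply Rabs_triang. lra. }
  rewrite <- Ech. 
  replace (RInt (K a) 0 t0 + RInt (K a) t0 t - RInt (K a0) 0 t0)
    with (RInt (fun s => K a s - K a0 s) 0 t0 + RInt (K a) t0 t) by (rewrite Emi; ring).
  eapply Rle_lt_trans. apply Rabs_triang.
  rewrite Rminus_0_r in I1.
  assert (A1 : Rabs t0 * (eps / (2 * (Rabs t0 + 1))) < eps / 2).
  { pose proof (Rabs_pos t0). pose proof (cond_pos eps).
    unfold Rdiv. rewrite Rinv_mult.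
    assert (0 < / (Rabs t0 + 1)) by (apply Rinv_0_lt_compat; lra).
    assert (Rabs t0 * / (Rabs t0 + 1) < 1).
    { apply (Rmult_lt_reg_r (Rabs t0 + 1)); [lra|].
      rewrite Rmult_assoc, Rinv_l by lra. lra. }
    replace (Rabs t0 * (eps * (/ 2 * / (Rabs t0 + 1)))) with
      ((Rabs t0 * / (Rabs t0 + 1)) * (eps / 2)) by (unfold Rdiv; ring).
    assert (0 < eps / 2) by lra. nra. }
  assert (A2 : Rabs (t - t0) * B < eps / 2).
  { assert (Rabs (t - t0) < eps / (2 * B)) by (apply Rabs_def1; lra).
    pose proof (Rabs_pos (t - t0)).
    apply (Rmult_lt_compat_r B) in H; [|lra].
    replace (eps / (2 * B) * B) with (eps / 2) in H by (field; lra). lra. }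
  lra.
Qed.

Lemma shear (F : R -> R -> R) c a0 s0 : Rabs c <= 1 ->
  continuity_2d_pt F (a0 + c * s0) s0 ->
  continuity_2d_pt (fun a s => F (a + c * s) s) a0 s0.
Proof.
  intros Hc H eps. destruct (H eps) as [d Hd]. exists (pos_div_2 d).
  intros u v Hu Hv. simpl in *. apply Hd.
  - replace (u + c * v - (a0 + c * s0)) with ((u - a0) + c * (v - s0)) by ring.
    eapply Rle_lt_trans. apply Rabs_triang. rewrite Rabs_mult.
    pose proof (Rabs_pos (v - s0)). pose proof (Rabs_pos c).
    assert (Rabs c * Rabs (v - s0) <= Rabs (v - s0)) by nra.
    lra.
  - pose proof (cond_pos d); lra.
Qed.

Lemma abspow_cont q : 0 < q -> forall u, continuity_pt (fun a => abspow a q) u.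
Proof.
  intros Hq u. destruct (Req_EM_T u 0) as [->|Hu].
  - apply continuity_pt_filterlim. apply filterlim_locally. intros eps.
    assert (Hd : 0 < Rpower eps (/ q)) by (unfold Rpower; apply exp_pos).
    exists (mkposreal _ Hd). intros y Hy. apply ballR in Hy. apply ballR.
    simpl in Hy. unfold abspow in *.
    destruct (Req_EM_T 0 0) as [_|h]; [|congruence].
    destruct (Req_EM_T y 0) as [_|hy].
    + rewrite Rminus_eq_0, Rabs_R0. apply cond_pos.
    + rewrite Rminus_0_r. 
      assert (Hp : 0 < Rpower (Rabs y) q) by (unfold Rpower; apply exp_pos).
      rewrite Rabs_right by lra.
      replace (pos eps) with (Rpower (Rpower eps (/ q)) q).
      * apply Rlt_Rpower_l; auto. split; [apply Rabs_pos_lt; auto|]. assert (Hy2 : Rabs (y - 0) < Rpower eps (/ q)) by exact Hy. rewrite Rminus_0_r in Hy2; exact Hy2.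
      * rewrite Rpower_mult, Rinv_l by lra. apply Rpower_1, cond_pos.
  - apply continuity_pt_ext_loc with (f := fun a => Rpower (Rabs a) q).
    + assert (Hu' : 0 < Rabs u) by (apply Rabs_pos_lt; auto).
      exists (mkposreal _ Hu'). intros y Hy. apply ballR in Hy. simpl in Hy.
      unfold abspow. destruct (Req_EM_T y 0) as [->|]; auto.
      assert (Hy2 : Rabs (0 - u) < Rabs u) by exact Hy. rewrite Rminus_0_l, Rabs_Ropp in Hy2. lra.
    + apply continuity_pt_comp with (f1 := Rabs) (f2 := fun x => Rpower x q).
      * apply Rcontinuity_abs.
      * apply derivable_continuous_pt. exists (q * Rpower (Rabs u) (q - 1)).
        apply derivable_pt_lim_power. apply Rabs_pos_lt; auto.
Qed.

Lemma phi_S p mu g1 g2 f g n x t :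
  phi_n p mu g1 g2 f g (S n) x t =
  f (x + t) + RInt (fun s => Nl p mu (phi_n p mu g1 g2 f g n) (psi_n p mu g1 g2 f g n) (x + t - s) s) 0 t.
Proof. unfold phi_n, psi_n; simpl. destruct (iterates p mu g1 g2 f g n); reflexivity. Qed.

Lemma psi_S p mu g1 g2 f g n x t :
  psi_n p mu g1 g2 f g (S n) x t =
  g (x - t) + RInt (fun s => Nl p mu (phi_n p mu g1 g2 f g n) (psi_n p mu g1 g2 f g n) (x - t + s) s) 0 t.
Proof. unfold phi_n, psi_n; simpl. destruct (iterates p mu g1 g2 f g n); reflexivity. Qed.

Definition Lb := - / 2.

Lemma Nl_cont p mu phi psi : 0 < p ->
  (forall y s, Lb < s -> continuity_2d_pt phi y s) ->
  (forall y s, Lb < s -> continuity_2d_pt psi y s) ->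
  forall y s, Lb < s -> continuity_2d_pt (Nl p mu phi psi) y s.
Proof.
  intros Hp H1 H2 y s Hs.
  apply continuity_2d_pt_ext with
   (f := fun y s => abspow (phi y s + psi y s) p * (/ Rpower 2 p)
                    - (mu * / (1 + s)) * ((phi y s + psi y s) * / 2)).
  { intros; reflexivity. }
  assert (Hs2 : continuity_2d_pt (fun y s => phi y s + psi y s) y s).
  { apply continuity_2d_pt_plus; auto. }
  apply continuity_2d_pt_minus.
  - apply continuity_2d_pt_mult.
    + apply (continuity_1d_2d_pt_comp (fun a => abspow a p)); auto.
      apply abspow_cont; auto.
    + apply continuity_2d_pt_const.
  - apply continuity_2d_pt_mult.
    + apply continuity_2d_pt_mult. apply continuity_2d_pt_const.
      apply continuity_2d_pt_inv.
      * apply continuity_2d_pt_plus. apply continuity_2d_pt_const.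
        apply continuity_2d_pt_id2.
      * unfold Lb in Hs; lra.
    + apply continuity_2d_pt_mult; auto. apply continuity_2d_pt_const.
Qed.

Lemma contf_2d (f : R -> R) c x t : (forall y, continuous f y) ->
  continuity_2d_pt (fun x t => f (x + c * t)) x t.
Proof.
  intros Hf. apply (continuity_1d_2d_pt_comp f (fun x t => x + c * t)).
  - apply continuity_pt_filterlim, Hf.
  - apply continuity_2d_pt_plus. apply continuity_2d_pt_id1.
    apply continuity_2d_pt_mult. apply continuity_2d_pt_const. apply continuity_2d_pt_id2.
Qed.

Lemma step_cont (F : R -> R -> R) (h : R -> R) c : Rabs c <= 1 ->
  (forall y, continuous h y) ->
  (forall y s, Lb < s -> continuity_2d_pt F y s) ->
  forall x t, Lb < t ->
  continuity_2d_pt (fun x t => h (x + c * t) + RInt (fun s => F (x + c * t + - c * s) s) 0 t) x t.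
Proof.
  intros Hc Hh HF x t Ht. apply continuity_2d_pt_plus.
  - apply contf_2d; auto.
  - apply (shear (fun a t => RInt (fun s => F (a + - c * s) s) 0 t)); auto.
    apply (param_cont (fun a s => F (a + - c * s) s) Lb).
    + unfold Lb; lra.
    + intros a s Hs. apply (shear F); auto. rewrite Rabs_Ropp; auto.
    + auto.
Qed.

Lemma iter_cont p mu g1 g2 (f g : R -> R) : 0 < p ->
  (forall y, continuous f y) -> (forall y, continuous g y) ->
  forall n y s, Lb < s ->
  continuity_2d_pt (phi_n p mu g1 g2 f g n) y s /\
  continuity_2d_pt (psi_n p mu g1 g2 f g n) y s.
Proof.
  intros Hp Hf Hg n. induction n as [|n IH]; intros y s Hs.
  - unfold phi_n, psi_n; simpl; split; apply continuity_2d_pt_const.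
  - assert (HN := Nl_cont p mu _ _ Hp (fun y s h => proj1 (IH y s h)) (fun y s h => proj2 (IH y s h))).
    split.
    + apply continuity_2d_pt_ext with (f := fun x t => f (x + 1 * t) + RInt (fun s => Nl p mu (phi_n p mu g1 g2 f g n) (psi_n p mu g1 g2 f g n) (x + 1 * t + - (1) * s) s) 0 t).
      * intros x t. rewrite phi_S. f_equal. f_equal; ring.
        apply RInt_ext. intros; f_equal; ring.
      * apply step_cont; auto. rewrite Rabs_R1; lra.
    + apply continuity_2d_pt_ext with (f := fun x t => g (x + (-1) * t) + RInt (fun s => Nl p mu (phi_n p mu g1 g2 f g n) (psi_n p mu g1 g2 f g n) (x + (-1) * t + - (-1) * s) s) 0 t).
      * intros x t. rewrite psi_S. f_equal. f_equal; ring.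
        apply RInt_ext. intros; f_equal; ring.
      * apply step_cont; auto. rewrite Rabs_left by lra; lra.
Qed.

Definition hf p mu s w := abspow w p / Rpower 2 p - mu / (1 + s) * (w / 2).

Lemma abspow_pos w p : 0 < w -> abspow w p = Rpower w p.
Proof. intros Hw. unfold abspow. destruct (Req_EM_T w 0); [lra|]. rewrite Rabs_right by lra; auto. Qed.

Lemma Apos p mu c : 1 < p -> 0 < mu -> 0 < c ->
  Rpower (mu * p * Rpower 2 p) (1 / (p - 1)) < c ->
  mu * p * Rpower 2 p < Rpower c (p - 1).
Proof.
  intros Hp Hmu Hc H.
  assert (HX : 0 < mu * p * Rpower 2 p).
  { assert (0 < Rpower 2 p) by (unfold Rpower; apply exp_pos).
    apply Rmult_lt_0_compat; [apply Rmult_lt_0_compat|]; lra. }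
  replace (mu * p * Rpower 2 p) with (Rpower (Rpower (mu * p * Rpower 2 p) (1 / (p - 1))) (p - 1)) at 1.
  - apply Rlt_Rpower_l; [lra|]. split; auto. unfold Rpower at 1; apply exp_pos.
  - rewrite Rpower_mult. replace (1 / (p - 1) * (p - 1)) with 1 by (field; lra).
    apply Rpower_1; auto.
Qed.

Lemma h_mono p mu c s u v : 1 < p -> 0 < mu -> 0 < c -> 0 <= s ->
  mu * p * Rpower 2 p < Rpower c (p - 1) ->
  c <= v -> v <= u -> hf p mu s v <= hf p mu s u.
Proof.
  intros Hp Hmu Hc Hs HA Hv Hu.
  destruct (Req_dec v u) as [->|Hne]; [lra|].
  assert (Hvu : v < u) by lra.
  destruct (MVT_cor2 (fun x => Rpower x p) (fun x => p * Rpower x (p - 1)) v u Hvu)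
    as [xi [Heq Hxi]].
  { intros x Hx. apply derivable_pt_lim_power. lra. }
  assert (HAx : Rpower c (p - 1) <= Rpower xi (p - 1)).
  { apply Rle_Rpower_l; lra. }
  set (P2 := Rpower 2 p) in *.
  assert (HP2 : 0 < P2) by (unfold P2, Rpower; apply exp_pos).
  unfold hf. rewrite !abspow_pos by lra.
  set (E := Rpower u p - Rpower v p) in *.
  set (Dd := u - v).
  assert (HD : 0 < Dd) by (unfold Dd; lra).
  assert (HE : mu * P2 * Dd <= E).
  { rewrite Heq. fold Dd.
    assert (mu * p * P2 * Dd <= Rpower xi (p - 1) * Dd) by (apply Rmult_le_compat_r; lra).
    assert (mu * P2 * Dd <= mu * p * P2 * Dd).
    { assert (0 < mu * P2 * Dd) by (apply Rmult_lt_0_compat; [apply Rmult_lt_0_compat|]; lra). nra. }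
    assert (Rpower xi (p - 1) * Dd <= p * Rpower xi (p - 1) * Dd).
    { assert (0 < Rpower xi (p - 1)) by (unfold Rpower; apply exp_pos). nra. }
    lra. }
  assert (H1 : mu * Dd <= E / P2).
  { apply (Rmult_le_reg_r P2); auto. replace (E / P2 * P2) with E by (field; lra). lra. }
  assert (H2 : mu / (1 + s) * (Dd / 2) <= mu * Dd).
  { assert (mu / (1 + s) <= mu).
    { unfold Rdiv. rewrite <- (Rmult_1_r mu) at 2. apply Rmult_le_compat_l; [lra|].
      rewrite <- Rinv_1. apply Rinv_le_contravar; lra. }
    assert (0 <= mu / (1 + s)) by (apply Rdiv_le_0_compat; lra). nra. }
  assert (Hsplit : Rpower u p / P2 - Rpower v p / P2 = E / P2) by (unfold E, Rdiv; ring).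
  assert (Hsplit2 : mu / (1 + s) * (u / 2) - mu / (1 + s) * (v / 2) = mu / (1 + s) * (Dd / 2)) by (unfold Dd, Rdiv; ring).
  fold P2. lra.
Qed.

Lemma h_base p mu c s : 1 < p -> 0 < mu -> 0 < c -> 0 <= s ->
  mu * p * Rpower 2 p < Rpower c (p - 1) -> 0 <= hf p mu s c.
Proof.
  intros Hp Hmu Hc Hs HA. unfold hf. rewrite abspow_pos by lra.
  set (P2 := Rpower 2 p) in *.
  assert (HP2 : 0 < P2) by (unfold P2, Rpower; apply exp_pos).
  replace (Rpower c p) with (c * Rpower c (p - 1)).
  2:{ rewrite <- (Rpower_1 c Hc) at 1. rewrite <- Rpower_plus. f_equal; ring. }
  assert (H1 : c * (mu * p) <= c * Rpower c (p - 1) / P2).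
  { apply (Rmult_le_reg_r P2); auto. replace (c * Rpower c (p - 1) / P2 * P2) with (c * Rpower c (p - 1)) by (field; lra).
    assert (0 < c * (mu * p * P2)) by (apply Rmult_lt_0_compat; [|apply Rmult_lt_0_compat; [apply Rmult_lt_0_compat|]]; lra).
    nra. }
  assert (H2 : mu / (1 + s) * (c / 2) <= c * (mu * p)).
  { assert (mu / (1 + s) <= mu).
    { unfold Rdiv. rewrite <- (Rmult_1_r mu) at 2. apply Rmult_le_compat_l; [lra|].
      rewrite <- Rinv_1. apply Rinv_le_contravar; lra. }
    assert (0 <= mu / (1 + s)) by (apply Rdiv_le_0_compat; lra).
    assert (mu / (1 + s) * c <= mu * c) by (apply Rmult_le_compat_r; lra).
    assert (mu * c * 1 < mu * c * p) by (apply Rmult_lt_compat_l; [apply Rmult_lt_0_compat|]; lra).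
    set (m1 := mu / (1 + s)) in *. assert (0 <= m1 * c) by (apply Rmult_le_pos; lra). lra. }
  lra.
Qed.

Lemma ex_int_N (N : R -> R -> R) :
  (forall y s, Lb < s -> continuity_2d_pt N y s) ->
  forall a c t, Rabs c <= 1 -> 0 <= t -> ex_RInt (fun s => N (a + c * s) s) 0 t.
Proof.
  intros HN a c t Hc Ht.
  apply (@ex_RInt_continuous R_CompleteNormedModule). intros z Hz.
  rewrite Rmin_left, Rmax_right in Hz by lra.
  apply (cont2_to_cont (fun a s => N (a + c * s) s)).
  apply shear; auto. apply HN. unfold Lb; lra.
Qed.

Definition Dm (Rs Ts x t : R) : Prop :=
  0 <= t /\ exists x0, Rabs x0 < Rs /\ Rabs (x - x0) < Ts - t.

Definition Nn p mu g1 g2 (f g : R -> R) n := Nl p mu (phi_n p mu g1 g2 f g n) (psi_n p mu g1 g2 f g n).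

Lemma main_ind (p mu Rs Ts g1 g2 : R) (f g : R -> R) (hp : 1 < p) (hmu : 0 < mu) (hg1 : 0 < g1) (hg2 : 0 < g2)
  (hA : mu * p * Rpower 2 p < Rpower (g1 + g2) (p - 1))
  (hfc : forall y, continuous f y) (hgc : forall y, continuous g y)
  (hA2f : forall y, Rabs y < Rs + Ts -> g1 <= f y)
  (hA2g : forall y, Rabs y < Rs + Ts -> g2 <= g y) n : forall x t, Dm Rs Ts x t ->
  g1 <= phi_n p mu g1 g2 f g n x t <= phi_n p mu g1 g2 f g (S n) x t /\
  g2 <= psi_n p mu g1 g2 f g n x t <= psi_n p mu g1 g2 f g (S n) x t.
Proof.
  set (Nn := Nn p mu g1 g2 f g).
  assert (Nn_cont : forall n y s, Lb < s -> continuity_2d_pt (Nn n) y s).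
  { intros n0. apply Nl_cont; [lra| |]; intros y s Hs;
    apply (iter_cont p mu g1 g2 f g ltac:(lra) hfc hgc n0 y s Hs). }
  assert (int_phi : forall n x t, 0 <= t -> ex_RInt (fun s => Nn n (x + t - s) s) 0 t).
  { intros n0 x t Ht. apply (ex_RInt_ext (fun s => Nn n0 ((x + t) + (-1) * s) s)).
    { intros; f_equal; ring. }
    apply ex_int_N; auto. rewrite Rabs_left by lra; lra. }
  assert (int_psi : forall n x t, 0 <= t -> ex_RInt (fun s => Nn n (x - t + s) s) 0 t).
  { intros n0 x t Ht. apply (ex_RInt_ext (fun s => Nn n0 ((x - t) + 1 * s) s)).
    { intros; f_equal; ring. }
    apply ex_int_N; auto. rewrite Rabs_R1; lra. }
  assert (Nn_eq : forall n y s, Nn n y s = hf p mu s (phi_n p mu g1 g2 f g n y s + psi_n p mu g1 g2 f g n y s)).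
  { reflexivity. }
  induction n as [|n IH]; intros x t [Ht [x0 [Hx0 Hxx0]]].
  - assert (Hc0 : forall y s, 0 <= s -> 0 <= Nn 0%nat y s).
    { intros y s Hs. rewrite Nn_eq. unfold phi_n, psi_n; simpl.
      apply h_base; lra. }
    change (phi_n p mu g1 g2 f g 0 x t) with g1. change (psi_n p mu g1 g2 f g 0 x t) with g2.
    rewrite phi_S, psi_S.
    assert (I1 := int_phi 0%nat x t Ht). assert (I2 := int_psi 0%nat x t Ht).
    change (Nl p mu (phi_n p mu g1 g2 f g 0) (psi_n p mu g1 g2 f g 0)) with (Nn 0%nat).
    assert (0 <= RInt (fun s => Nn 0%nat (x + t - s) s) 0 t).
    { apply RInt_ge_0; auto. intros; apply Hc0; lra. }
    assert (0 <= RInt (fun s => Nn 0%nat (x - t + s) s) 0 t).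
    { apply RInt_ge_0; auto. intros; apply Hc0; lra. }
    assert (g1 <= f (x + t)).
    { apply hA2f. replace (x + t) with (x0 + (x - x0) + t) by ring.
      eapply Rle_lt_trans. apply Rabs_triang. rewrite (Rabs_right t) by lra.
      pose proof (Rabs_triang x0 (x - x0)). lra. }
    assert (g2 <= g (x - t)).
    { apply hA2g. replace (x - t) with (x0 + (x - x0) + - t) by ring.
      eapply Rle_lt_trans. apply Rabs_triang. rewrite Rabs_Ropp, (Rabs_right t) by lra.
      pose proof (Rabs_triang x0 (x - x0)). lra. }
    lra.
  - assert (Hxt : Dm Rs Ts x t) by (split; [auto| exists x0; auto]).
    destruct (IH x t Hxt) as [[H1 H2] [H3 H4]].
    rewrite (phi_S _ _ _ _ _ _ (S n)), (psi_S _ _ _ _ _ _ (S n)).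
    rewrite (phi_S _ _ _ _ _ _ n) in H2 |- *. rewrite (psi_S _ _ _ _ _ _ n) in H4 |- *.
    change (Nl p mu (phi_n p mu g1 g2 f g n) (psi_n p mu g1 g2 f g n)) with (Nn n) in *.
    change (Nl p mu (phi_n p mu g1 g2 f g (S n)) (psi_n p mu g1 g2 f g (S n))) with (Nn (S n)).
    assert (Hmono : forall y s, Dm Rs Ts y s -> Nn n y s <= Nn (S n) y s).
    { intros y s Hys. destruct (IH y s Hys) as [[a1 a2] [a3 a4]].
      rewrite !Nn_eq. apply (h_mono p mu (g1 + g2)); try lra. apply Hys. }
    assert (R1 : RInt (fun s => Nn n (x + t - s) s) 0 t <= RInt (fun s => Nn (S n) (x + t - s) s) 0 t).
    { apply RInt_le; auto using int_phi. intros s Hs. apply Hmono.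
      split; [lra|]. exists x0; split; auto.
      replace (x + t - s - x0) with ((x - x0) + (t - s)) by ring.
      eapply Rle_lt_trans. apply Rabs_triang. rewrite (Rabs_right (t - s)) by lra. lra. }
    assert (R2 : RInt (fun s => Nn n (x - t + s) s) 0 t <= RInt (fun s => Nn (S n) (x - t + s) s) 0 t).
    { apply RInt_le; auto using int_psi. intros s Hs. apply Hmono.
      split; [lra|]. exists x0; split; auto.
      replace (x - t + s - x0) with ((x - x0) + - (t - s)) by ring.
      eapply Rle_lt_trans. apply Rabs_triang. rewrite Rabs_Ropp, (Rabs_right (t - s)) by lra. lra. }
    lra.
Qed.


Theorem lemma4p1 (p mu Rs Ts g1 g2 : R) (f g : R -> R)
  (hp : 1 < p) (hmu : 0 < mu) (hpmu : p < 1 + 2 / mu)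
  (hRs : 0 < Rs) (hTs : 0 < Ts)
  (hg1 : 0 < g1) (hg2 : 0 < g2)
  (hgam1 : 1 < g1 + g2)
  (hgam2 : Rpower (mu * p * Rpower 2 p) (1 / (p - 1)) < g1 + g2)
  (hfc : forall y, continuous f y) (hgc : forall y, continuous g y)
  (hA2f : forall y, Rabs y < Rs + Ts -> g1 <= f y)
  (hA2g : forall y, Rabs y < Rs + Ts -> g2 <= g y) :
  forall (n : nat) (x t : R), K_dom Rs Ts x t ->
    phi_n p mu g1 g2 f g (S n) x t >= phi_n p mu g1 g2 f g n x t /\
    phi_n p mu g1 g2 f g n x t >= 0 /\
    psi_n p mu g1 g2 f g (S n) x t >= psi_n p mu g1 g2 f g n x t /\
    psi_n p mu g1 g2 f g n x t >= 0.
Proof.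
  intros n x t [Ht Hx].
  assert (HA := Apos p mu (g1 + g2) hp hmu ltac:(lra) hgam2).
  destruct (main_ind p mu Rs Ts g1 g2 f g hp hmu hg1 hg2 HA hfc hgc hA2f hA2g n x t
    (conj (Rlt_le _ _ Ht) Hx)) as [[a1 a2] [a3 a4]].
  repeat split; lra.
Qed.
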